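(* There exist two infinite bit sequences $\{I_n^0\}_{n=0}^\infty\in\{0,1\}^\omega$ and $\{I_n^1\}_{n=0}^\infty\in\{0,1\}^\omega$ such that for every $Q\in\mathbb{N}$ there exist $t\in\mathbb{N}$ and two $Q$-indistinguishable binary words $x=x_0\ldots x_{t-1}$ and $y=y_0\ldots y_{t-1}$ of length $t$ with \[I_0^{x_0}\oplus\cdots\oplus I_{t-1}^{x_{t-1}}\neq I_0^{y_0}\oplus\cdots\oplus I_{t-1}^{y_{t-1}},\] where $\oplus$ denotes XOR.
   Context: Two binary words $x,y\in\{0,1\}^*$ are $Q$-indistinguishable if there is no deterministic finite automaton over the alphabet $\{0,1\}$ with at most $Q$ states which reaches different states after reading $x$ and after reading $y$ (from its initial state). *)

(* Defs.v *)
From mathcomp Require Import all_boot.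
Set Implicit Arguments. Unset Strict Implicit. Unset Printing Implicit Defensive.

(* A DFA over {0,1} (bits as bool: false = 0, true = 1) with state type S,
   initial state s0 and transition function delta.  Running it on a word. *)
Definition run (S : Type) (delta : S -> bool -> S) (s0 : S) (w : seq bool) : S :=
  foldl delta s0 w.

Definition Q_indist (Q : nat) (x y : seq bool) : Prop :=
  forall (S : finType) (s0 : S) (delta : S -> bool -> S),
    #|S| <= Q -> run delta s0 x = run delta s0 y.

(* I b n is the bit I_n^b.  xorsum I w = I_0^{w_0} xor ... xor I_{t-1}^{w_{t-1}}. *)
Definition xorsum (I : bool -> nat -> bool) (w : seq bool) : bool :=
  foldr addb false [seq I (nth false w i) i | i <- iota 0 (size w)].

(* Main.v *)
Require Import Defs.
From mathcomp Require Import all_boot.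

Section Aux.

Lemma foldl_nseq (S : Type) (delta : S -> bool -> S) (c : bool) n s :
  foldl delta s (nseq n c) = iter n (fun s => delta s c) s.
Proof. by elim: n s => [|n IH] s //=; rewrite IH -iterSr. Qed.

Lemma pump (S : finType) (g : S -> S) (Q : nat) (s : S) :
  #|S| <= Q -> forall n, Q <= n -> iter (n + (Q.+1)`!) g s = iter n g s.
Proof.
move=> hS.
have [i [j [lij ljQ eij]]] : exists i j, [/\ i < j, j <= Q & iter i g s = iter j g s].
  pose F := fun k : 'I_Q.+1 => iter k g s.
  have : ~~ injectiveb F.
    apply/negP => /injectiveP inj; have := @leq_card _ _ F inj.
    by rewrite card_ord; move=> h; have := leq_trans h hS; rewrite ltnn.
  move/injectiveP => ninj.
  have : ~ (forall k1 k2 : 'I_Q.+1, (F k1 == F k2) ==> (k1 == k2)).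
    by move=> H; apply: ninj => k1 k2 e; apply/eqP; have := H k1 k2; rewrite e eqxx.
  move=> H.
  have : ~~ [forall k1 : 'I_Q.+1, forall k2 : 'I_Q.+1, (F k1 == F k2) ==> (k1 == k2)].
    by apply/negP => /forallP H2; apply: H => k1 k2; have := H2 k1 => /forallP.
  rewrite negb_forall => /existsP [k1]; rewrite negb_forall => /existsP [k2].
  rewrite negb_imply => /andP [/eqP e ne].
  case: (ltngtP k1 k2) => [lt|gt|eq].
  - by exists k1, k2; split => //; rewrite -ltnS.
  - by exists k2, k1; split => //; rewrite -ltnS.
  - by move: ne; rewrite (val_inj eq) eqxx.
have hk : forall k, iter (i + k * (j - i)) g s = iter i g s.
  elim=> [|k IH]; first by rewrite addn0.
  by rewrite mulSn addnCA iterD IH -iterD subnK ?eij // ltnW.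
have /dvdnP [kk hkM] : (j - i) %| (Q.+1)`!.
  apply: dvdn_fact; rewrite subn_gt0 lij /=.
  by apply: leq_trans (leq_subr _ _) _; apply: leq_trans ljQ _.
move=> n hn.
have hin : i <= n by apply: leq_trans (ltnW (leq_trans lij ljQ)) hn.
rewrite hkM -(subnK hin) -addnA !(iterD (n - i)) hk //.
Qed.

Variable f : nat -> bool.
Let I := fun b : bool => if b then f else (fun _ => false).

Fixpoint h (lo : nat) (w : seq bool) : bool :=
  if w is c :: w' then I c lo (+) h lo.+1 w' else false.

Lemma hE w lo :
  foldr addb false [seq I (nth false w i) (lo + i) | i <- iota 0 (size w)] = h lo w.
Proof.
elim: w lo => [|c w IH] lo //=.
rewrite addn0 -IH; congr (_ (+) _).
rewrite -(addn0 1) iotaDl -map_comp; congr foldr; apply: eq_map => i /=.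
by rewrite add0n add1n addnS.
Qed.

Lemma xorsumE w : xorsum I w = h 0 w.
Proof. by rewrite -hE /xorsum; congr foldr. Qed.

Lemma h_cat lo w1 w2 : h lo (w1 ++ w2) = h lo w1 (+) h (lo + size w1) w2.
Proof.
elim: w1 lo => [|c w1 IH] lo /=; first by rewrite addn0.
by rewrite IH addbA addSnnS.
Qed.

Lemma h_false lo n : h lo (nseq n false) = false.
Proof. by elim: n lo => [|n IH] lo //=; rewrite IH. Qed.

Lemma h_true_add lo m n :
  h lo (nseq (m + n) true) = h lo (nseq m true) (+) h (lo + m) (nseq n true).
Proof. by rewrite nseqD h_cat size_nseq. Qed.

Lemma h_true_zero lo n : (forall k, lo <= k < lo + n -> f k = false) ->
  h lo (nseq n true) = false.
Proof.
elim: n lo => [|n IH] lo H //=.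
rewrite H ?leqnn ?addnS ?ltnS ?leq_addr // IH // => k /andP [a b].
by apply: H; rewrite addnS -addSn b andbT ltnW.
Qed.

End Aux.

Definition isfact (n : nat) : bool := [exists k : 'I_n.+1, k`! == n].

Lemma isfact_fact N : isfact N`!.
Proof.
apply/existsP; have hN : N < N`!.+1 by rewrite ltnS fact_geq.
by exists (Ordinal hN).
Qed.

Lemma isfact_gap N k : 0 < N -> N`! < k < N`! + N`! -> isfact k = false.
Proof.
move=> N0 /andP [a b]; apply/negbTE/negP => /existsP [m /eqP e].
case: (leqP m N) => hm.
  by have := leq_fact hm; rewrite e leqNgt a.
have := leq_fact hm; rewrite factS e mulSn => c.
have : N`! + N`! <= k by apply: leq_trans c; rewrite leq_add2l -{1}(mul1n N`!) leq_mul2r N0 orbT.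
by rewrite leqNgt b.
Qed.

Theorem lemma1 :
  exists I0 I1 : nat -> bool,
    forall Q : nat, exists (t : nat) (x y : seq bool),
      [/\ size x = t, size y = t, Q_indist Q x y &
          xorsum (fun b => if b then I1 else I0) x
            != xorsum (fun b => if b then I1 else I0) y].
Proof.
exists (fun _ => false), isfact => Q.
set M := (Q.+1)`!.
have QM : Q <= M by apply: leq_trans (leqnSn Q) (fact_geq _).
exists (M + M + M), (nseq (M + M) false ++ nseq M true),
  (nseq M false ++ nseq (M + M) true).
split.
- by rewrite size_cat !size_nseq.
- by rewrite size_cat !size_nseq addnA.
- move=> S s0 delta hS; rewrite /run !foldl_cat !foldl_nseq.
  by rewrite !(pump _ _ _ _ hS M QM).
- rewrite !(xorsumE isfact) !h_cat !h_false /= !size_nseq !add0n.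
  rewrite h_true_add.
  have -> : h isfact M (nseq M true) = true; last by case: (h _ _ _).
  have M0 : 0 < M by apply: fact_gt0.
  rewrite -(prednK M0) /= prednK //.
  rewrite isfact_fact /= h_true_zero // => k /andP [a b].
  apply: (isfact_gap Q.+1) => //; rewrite -/M a /=.
  by move: b; rewrite addSn -addnS prednK.
Qed.
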